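(* Consider the problem and algorithm AC2CD described in the context (including the additional requirement on $A^{k,i}$), and assume that $f$ is convex over $\mathbb{R}^n$. Let $f^*$ be the optimal value of the problem and define \[ K=\max\Bigl\{\frac1{A_l},\frac{L^{\max}}{2\delta(1-\gamma)}\Bigr\}R_0+2\hat L R_0+G^*. \] Then at every outer iteration $k$, \[ f(x^k)-f(x^{k+1})\ge\frac{\gamma\,(f(x^{k+1})-f^* )^2}{A_u(n-1)K^2}. \]
   Context: Problem: minimize $f(x)$ subject to $e^T x = b$ and $l_i \le x_i \le u_i$ ($i=1,\dots,n$), where $n\ge 2$, $e$ is the all-ones vector, $b\in\mathbb{R}$, $l_i\in\mathbb{R}\cup\{-\infty\}$, $u_i\in\mathbb{R}\cup\{+\infty\}$, $l_i<u_i$, and $f:\mathbb{R}^n\to\mathbb{R}$ is continuously differentiable with $\nabla f$ Lipschitz continuous on $\mathbb{R}^n$. $\mathcal F$ is the feasible set, $e_i$ the $i$th unit vector. For $i\ne j$, $L_{i,j}>0$ are fixed constants such that for every $x\in\mathbb{R}^n$ and $s,t\in\mathbb{R}$, $|\nabla f(x+s(e_i-e_j))^T(e_i-e_j)-\nabla f(x+t(e_i-e_j))^T(e_i-e_j)|\le L_{i,j}|s-t|$; $L_{i,i}=0$; $L^{\max}=\max_{i,j}L_{i,j}$; $L_j=\sum_{i=1}^nL_{i,j}$; $\hat L=\max_jL_j$. $\|x\|_{\langle j\rangle}=\sqrt{\sum_{i\ne j}x_i^2}$. For $x\in\mathcal F$, $D_h(x)=\min\{x_h-l_h,u_h-x_h\}$.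 A point $x^*\in\mathcal F$ is stationary iff there is $\lambda^*\in\mathbb{R}$ with $\nabla_i f(x^* )\ge\lambda^*$ if $x^*_i=l_i$, $=\lambda^*$ if $l_i<x^*_i<u_i$, $\le\lambda^*$ if $x^*_i=u_i$; $X^*$ is the set of stationary points. With $\mathcal L_0=\{x\in\mathcal F: f(x)\le f(x^0)\}$, define $R_0=\max\{\|x-x^*\|_{\langle j\rangle}: j\in\{1,\dots,n\},\ x\in\mathcal L_0,\ x^*\in X^*\}$ and $G^*=\max\{\nabla_jf(x^* )-\nabla_if(x^* ): i,j\in\{1,\dots,n\},\ x^*\in X^*\}$. Algorithm AC2CD with parameters $\tau\in(0,1]$, $\gamma,\delta\in(0,1)$, $0<A_l\le A_u<\infty$ and starting point $x^0\in\mathcal F$: for $k=0,1,2,\dots$: let $D^k=\max_h D_h(x^k)$; choose $j(k)$ with $D_{j(k)}(x^k)\ge\tau D^k$; choose a permutation $(p^k_1,\dots,p^k_n)$ of $\{1,\dots,n\}$; set $z^{k,1}=x^k$; for $i=1,\dots,n$ (inner iteration $(k,i)$): $g^{k,i}=\nabla_{j(k)}f(z^{k,i})-\nabla_{p^k_i}f(z^{k,i})$, $d^{k,i}=g^{k,i}(e_{p^k_i}-e_{j(k)})$; $\bar\alpha^{k,i}=\min\{u_{p^k_i}-z^{k,i}_{p^k_i},z^{k,i}_{j(k)}-l_{j(k)}\}/g^{k,i}$ if $g^{k,i}>0$, $=\min\{z^{k,i}_{p^k_i}-l_{p^k_i},u_{j(k)}-z^{k,i}_{j(k)}\}/|g^{k,i}|$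 if $g^{k,i}<0$, $=0$ if $g^{k,i}=0$; choose $A^{k,i}\in[A_l,A_u]$, set $\Delta^{k,i}=\min\{\bar\alpha^{k,i},A^{k,i}\}$; starting from $\alpha=\Delta^{k,i}$, while $f(z^{k,i}+\alpha d^{k,i})>f(z^{k,i})+\gamma\alpha\nabla f(z^{k,i})^Td^{k,i}$ replace $\alpha$ by $\delta\alpha$; $\alpha^{k,i}$ is the final $\alpha$ and $z^{k,i+1}=z^{k,i}+\alpha^{k,i}d^{k,i}$. Then $x^{k+1}=z^{k,n+1}$. Additional requirement: the values $A^{k,i}\in[A_l,A_u]$ are chosen so that $l_{j(k)}<z^{k,i}_{j(k)}<u_{j(k)}$ for all $k\ge0$ and $i=1,\dots,n+1$. Standing assumptions: $\mathcal L_0$ is nonempty and compact, and every $x\in\mathcal L_0$ has some index $i$ with $l_i<x_i<u_i$. *)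

(* Defs.v *)
From HB Require Import structures.
From mathcomp Require Import all_boot all_order all_algebra.
From mathcomp Require Import all_classical all_reals ereal.
Set Implicit Arguments. Unset Strict Implicit. Unset Printing Implicit Defensive.
Import Order.TTheory GRing.Theory Num.Theory.
Local Open Scope ring_scope.

Section Defs.
Variable R : realType.
Variable n : nat.
Notation vec := ('I_n -> R).

Definition vadd (x y : vec) : vec := fun i => x i + y i.
Definition vsub (x y : vec) : vec := fun i => x i - y i.
Definition vscale (a : R) (x : vec) : vec := fun i => a * x i.
Definition unitv (i : 'I_n) : vec := fun k => if k == i then 1 else 0.
Definition dirv (i j : 'I_n) : vec := fun k => unitv i k - unitv j k.
Definition dotv (x y : vec) : R := \sum_(i < n) x i * y i.
Definition normv (x : vec) : R := Num.sqrt (\sum_(i < n) x i ^+ 2).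
Definition normj (j : 'I_n) (x : vec) : R :=
  Num.sqrt (\sum_(i < n | i != j) x i ^+ 2).

Definition is_gradient (f : vec -> R) (grad : vec -> vec) : Prop :=
  forall x : vec, forall eps : R, 0 < eps -> exists2 dl : R, 0 < dl &
    forall h : vec, normv h < dl ->
      `|f (vadd x h) - f x - dotv (grad x) h| <= eps * normv h.

Definition lipschitz_grad (grad : vec -> vec) : Prop :=
  exists L : R, forall x y : vec, normv (vsub (grad x) (grad y)) <= L * normv (vsub x y).

Definition convex_fun (f : vec -> R) : Prop :=
  forall (x y : vec) (t : R), 0 <= t <= 1 ->
    f (vadd (vscale t x) (vscale (1 - t) y)) <= t * f x + (1 - t) * f y.

Definition pair_lip_consts (grad : vec -> vec) (Lc : 'I_n -> 'I_n -> R) : Prop :=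
  (forall i j : 'I_n, i != j -> 0 < Lc i j) /\
  (forall i : 'I_n, Lc i i = 0) /\
  (forall (i j : 'I_n) (x : vec) (s t : R), i != j ->
     `|dotv (grad (vadd x (vscale s (dirv i j)))) (dirv i j)
       - dotv (grad (vadd x (vscale t (dirv i j)))) (dirv i j)| <= Lc i j * `|s - t|).

Definition Lmax (Lc : 'I_n -> 'I_n -> R) : R :=
  \big[Num.max/0]_(i < n) \big[Num.max/0]_(j < n) Lc i j.
Definition Lcol (Lc : 'I_n -> 'I_n -> R) (j : 'I_n) : R := \sum_(i < n) Lc i j.
Definition Lhat (Lc : 'I_n -> 'I_n -> R) : R := \big[Num.max/0]_(j < n) Lcol Lc j.

Variables (b : R) (lo up : 'I_n -> \bar R).

Definition feasible (x : vec) : Prop :=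
  \sum_(i < n) x i = b /\ forall i, (lo i <= (x i)%:E <= up i)%E.

Definition stationary (grad : vec -> vec) (x : vec) : Prop :=
  feasible x /\ exists lam : R, forall i : 'I_n,
    ((x i)%:E = lo i -> lam <= grad x i) /\
    ((lo i < (x i)%:E < up i)%E -> grad x i = lam) /\
    ((x i)%:E = up i -> grad x i <= lam).

Definition Dh (x : vec) (h : 'I_n) : \bar R :=
  Order.min ((x h)%:E - lo h)%E (up h - (x h)%:E)%E.
Definition Dmax (x : vec) : \bar R := \big[Order.max/-oo%E]_(h < n) Dh x h.

(* \bar alpha^{k,i} for current point z, index p = p^k_i, j = j(k), g = g^{k,i} *)
Definition alphabar (z : vec) (p j : 'I_n) (g : R) : \bar R :=
  if 0 < g then (Order.min (up p - (z p)%:E) ((z j)%:E - lo j) * (g^-1)%:E)%E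
  else if g < 0 then (Order.min ((z p)%:E - lo p) (up j - (z j)%:E) * (`|g|^-1)%:E)%E
  else 0%E.

Definition armijo (f : vec -> R) (grad : vec -> vec) (gamma : R) (z d : vec) (a : R) : Prop :=
  f (vadd z (vscale a d)) <= f z + gamma * a * dotv (grad z) d.

(* One full run of AC2CD: x k = x^k, j k = j(k), p k = (p^k_1,...,p^k_n)
   (0-based), z k i = z^{k,i+1}, A k i = A^{k,i+1}, alpha k i = alpha^{k,i+1}. *)
Definition AC2CD_run (f : vec -> R) (grad : vec -> vec)
  (tau gamma delta Al Au : R) (x : nat -> vec) (j : nat -> 'I_n)
  (p : nat -> 'I_n -> 'I_n) (z : nat -> nat -> vec) (A alpha : nat -> nat -> R) : Prop :=
  forall k : nat,
    (tau%:E * Dmax (x k) <= Dh (x k) (j k))%E /\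
    injective (p k) /\
    z k 0%N = x k /\
    x k.+1 = z k n /\
    (forall i : 'I_n,
       let zi := z k i in
       let g := grad zi (j k) - grad zi (p k i) in
       let d := vscale g (dirv (p k i) (j k)) in
       let Delta := fine (Order.min (alphabar zi (p k i) (j k) g) (A k i)%:E) in
       Al <= A k i <= Au /\
       (exists m : nat,
          alpha k i = Delta * delta ^+ m /\
          armijo f grad gamma zi d (alpha k i) /\
          (forall m' : nat, (m' < m)%N -> ~ armijo f grad gamma zi d (Delta * delta ^+ m'))) /\
       z k i.+1 = vadd zi (vscale (alpha k i) d)) /\
    (* additional requirement on the A^{k,i} *)
    (forall i : nat, (i <= n)%N -> (lo (j k) < (z k i (j k))%:E < up (j k))%E).

Definition is_max_of (P : R -> Prop) (m : R) : Prop :=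
  P m /\ forall r, P r -> r <= m.

Definition is_opt_value (f : vec -> R) (fs : R) : Prop :=
  (forall y, feasible y -> fs <= f y) /\
  (forall e : R, 0 < e -> exists2 y, feasible y & f y < fs + e).

Definition in_L0 (f : vec -> R) (x0 y : vec) : Prop := feasible y /\ f y <= f x0.

Definition R0_set (f : vec -> R) (grad : vec -> vec) (x0 : vec) (r : R) : Prop :=
  exists (jj : 'I_n) (y xs : vec),
    in_L0 f x0 y /\ stationary grad xs /\ r = normj jj (vsub y xs).

Definition G_set (grad : vec -> vec) (r : R) : Prop :=
  exists (i jj : 'I_n) (xs : vec), stationary grad xs /\ r = grad xs jj - grad xs i.

End Defs.

(* Main.v *)
Require Import Defs.
From HB Require Import structures.
From mathcomp Require Import all_boot all_order all_algebra.
From mathcomp Require Import all_classical all_reals ereal.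
From mathcomp Require Import ring lra.
Import Order.TTheory GRing.Theory Num.Theory.
Set Implicit Arguments. Unset Strict Implicit. Unset Printing Implicit Defensive.
Local Open Scope ring_scope.

Section Vec.
Context (R : realType) (n : nat).
Local Notation vec := ('I_n -> R).
Local Notation unitv := (@unitv R n).
Local Notation dirv := (@dirv R n).

Lemma dotvDr (u v w : vec) : dotv u (vadd v w) = dotv u v + dotv u w.
Proof. by rewrite /dotv -big_split; apply: eq_bigr => i _; rewrite /vadd mulrDr. Qed.

Lemma dotvBr (u v w : vec) : dotv u (vsub v w) = dotv u v - dotv u w.
Proof. by rewrite /dotv -sumrB; apply: eq_bigr => i _; rewrite /vsub mulrBr. Qed.

Lemma dotvBl (u v w : vec) : dotv (vsub u v) w = dotv u w - dotv v w.
Proof. by rewrite /dotv -sumrB; apply: eq_bigr => i _; rewrite /vsub mulrBl. Qed.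

Lemma dotvZr (u v : vec) a : dotv u (vscale a v) = a * dotv u v.
Proof. by rewrite /dotv mulr_sumr; apply: eq_bigr => i _; rewrite /vscale mulrCA. Qed.

Lemma sum_unitv (u : vec) a : \sum_i u i * unitv a i = u a.
Proof.
rewrite (bigD1 a) //= big1 ?addr0; first by rewrite /unitv eqxx mulr1.
by move=> i /negbTE hi; rewrite /unitv hi mulr0.
Qed.

Lemma dot_dirv (u : vec) a c : dotv u (dirv a c) = u a - u c.
Proof.
rewrite /dotv /dirv.
under eq_bigr do rewrite mulrBr.
by rewrite sumrB !sum_unitv.
Qed.

Lemma sum_dirv a c : \sum_(i < n) dirv a c i = 0.
Proof.
transitivity (dotv (fun _ => 1) (dirv a c)); last by rewrite dot_dirv subrr.
by rewrite /dotv; apply: eq_bigr => i _; rewrite mul1r.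
Qed.

Lemma dirvv a : dirv a a = (fun _ => 0).
Proof. by apply/funext => i; rewrite /dirv subrr. Qed.

Lemma normv_ge0 (h : vec) : 0 <= normv h.
Proof. exact: sqrtr_ge0. Qed.

Lemma normvZ t (h : vec) : normv (vscale t h) = `|t| * normv h.
Proof.
rewrite /normv /vscale.
under eq_bigr do rewrite exprMn.
rewrite -mulr_sumr sqrtrM ?sqr_ge0 //.
by rewrite sqrtr_sqr.
Qed.

End Vec.

Section Grad.
Context (R : realType) (n : nat) (f : ('I_n -> R) -> R) (grad : ('I_n -> R) -> 'I_n -> R).
Local Notation vec := ('I_n -> R).
Hypothesis hg : is_gradient f grad.
Hypothesis hc : convex_fun f.

Lemma grad_ineq (x y : vec) : f x + dotv (grad x) (vsub y x) <= f y.
Proof.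
set h := vsub y x; set N := normv h.
have hN : 0 <= N := normv_ge0 h.
rewrite -lerBrDl; apply/ler_addgt0Pr => e he.
set eps := e / (N + 1).
have heps : 0 < eps by rewrite divr_gt0 // ltr_wpDl.
have [dl hdl hH] := hg x heps.
set t := Num.min 1 (dl / (2 * (N + 1))).
have ht0 : 0 < t by rewrite lt_min ltr01 /= divr_gt0 // mulr_gt0 // ltr_wpDl.
have ht1 : t <= 1 by rewrite ge_min lexx.
have htd : t <= dl / (2 * (N + 1)) by rewrite ge_min lexx orbT.
have hn : normv (vscale t h) < dl.
  rewrite normvZ (gtr0_norm ht0).
  apply: (le_lt_trans (ler_wpM2r hN htd)).
  rewrite mulrAC ltr_pdivrMr ?mulr_gt0 ?ltr_wpDl //.
  have : N * 1 < N * 2 + 2 by lra.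
  move=> h1. rewrite mulrDr mulr1. nra.
clearbody t.
have := hH _ hn; rewrite normvZ (gtr0_norm ht0) => /ler_normlP [h1 _].
have hconv := hc y x (t := t).
have heq : vadd x (vscale t h) = vadd (vscale t y) (vscale (1 - t) x).
  by apply/funext => i; rewrite /vadd /vscale /h /vsub; ring.
rewrite -heq in hconv.
have {hconv} h2 : f (vadd x (vscale t h)) - f x <= t * (f y - f x).
  have ht01 : 0 <= t <= 1 by rewrite (ltW ht0) ht1.
  have h3 := hconv ht01. lra.
rewrite dotvZr -/N in h1.
have h4 : t * (dotv (grad x) h - (f y - f x) - eps * N) <= 0 by lra.
rewrite pmulr_rle0 // in h4.
have h5 : eps * N <= e.
  rewrite /eps mulrAC ler_pdivrMr ?ltr_wpDl //; nra.
clearbody eps N.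
lra.
Qed.

End Grad.

Section Descent.
Context (R : realType) (n : nat) (f : ('I_n -> R) -> R) (grad : ('I_n -> R) -> 'I_n -> R).
Local Notation vec := ('I_n -> R).
Hypothesis hg : is_gradient f grad.
Hypothesis hc : convex_fun f.
Variables (w : vec) (La : R).
Hypothesis hL : forall (x : vec) (s t : R),
  `|dotv (grad (vadd x (vscale s w))) w - dotv (grad (vadd x (vscale t w))) w| <= La * `|s - t|.

Lemma vadd0 (x : vec) : vadd x (vscale 0 w) = x.
Proof. by apply/funext => i; rewrite /vadd /vscale mul0r addr0. Qed.

Lemma descent_N (x : vec) (s : R) (N : nat) :
  f (vadd x (vscale s w)) - f x - s * dotv (grad x) w - La * s ^+ 2 / 2
    <= La * s ^+ 2 / (2 * N.+1%:R).
Proof.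
set P := fun t => vadd x (vscale t w).
set psi := fun t => dotv (grad (P t)) w.
set h := s / N.+1%:R.
have hN : 0 < N.+1%:R :> R by rewrite ltr0n.
have hP0 : P 0 = x by rewrite /P vadd0.
have La0 : 0 <= La.
  have := hL x 1 0; rewrite subr0 normr1 mulr1; apply: le_trans; exact: normr_ge0.
have key : forall k : nat, f (P (k%:R * h)) - f x <=
    k%:R * h * psi 0 + La * h ^+ 2 * (k%:R * (k%:R + 1)) / 2.
  elim=> [|k IH].
    by rewrite mul0r hP0 subrr !mul0r mulr0 mul0r addr0.
  have hstep : f (P (k.+1%:R * h)) - f (P (k%:R * h)) <= h * psi (k.+1%:R * h).
    have := grad_ineq hg hc (P (k.+1%:R * h)) (P (k%:R * h)).
    have -> : vsub (P (k%:R * h)) (P (k.+1%:R * h)) = vscale (- h) w.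
      by apply/funext => i; rewrite /vsub /P /vadd /vscale -natr1; ring.
    rewrite dotvZr /psi; lra.
  have hlip : h * (psi (k.+1%:R * h) - psi 0) <= La * h ^+ 2 * k.+1%:R.
    apply: le_trans (ler_norm _) _.
    rewrite normrM.
    apply: le_trans (ler_wpM2l (normr_ge0 h) (hL x _ _)) _.
    rewrite subr0 mulrCA -normrM ger0_norm; last first.
      by rewrite mulrCA -expr2 mulr_ge0 ?sqr_ge0 ?ler0n.
    by rewrite le_eqVlt; apply/orP; left; apply/eqP; ring.
  have hk1 : k.+1%:R = k%:R + 1 :> R by rewrite natr1.
  rewrite hk1 in hstep hlip *.
  have e1 : (k%:R + 1) * h * psi 0 + La * h ^+ 2 * ((k%:R + 1) * (k%:R + 1 + 1)) / 2
    = (k%:R * h * psi 0 + La * h ^+ 2 * (k%:R * (k%:R + 1)) / 2) + h * psi 0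
      + La * h ^+ 2 * (k%:R + 1) by field.
  rewrite e1. lra.
have := key N.+1.
have -> : N.+1%:R * h = s by rewrite /h mulrC divfK // gt_eqF.
rewrite /P /psi hP0 => hk.
have e2 : La * h ^+ 2 * (N.+1%:R * (N.+1%:R + 1)) / 2 = La * s ^+ 2 / 2 + La * s ^+ 2 / (2 * N.+1%:R).
  by rewrite /h; field; rewrite gt_eqF.
rewrite e2 in hk. clear key e2. clearbody psi P h. move: hk. set X := f (vadd _ _). set Y := dotv _ _. set Z := La * _ / (2 * _). set W := La * _ / 2. move=> hk. lra.
Qed.

Lemma descent (x : vec) (s : R) :
  f (vadd x (vscale s w)) <= f x + s * dotv (grad x) w + La * s ^+ 2 / 2.
Proof.
apply/ler_addgt0Pr => e he.
have La0 : 0 <= La.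
  have := hL x 1 0; rewrite subr0 normr1 mulr1; apply: le_trans; exact: normr_ge0.
set q := La * s ^+ 2 / (2 * e).
have hq : 0 <= q.
  apply: divr_ge0; first by apply: mulr_ge0 => //; exact: sqr_ge0.
  by apply: mulr_ge0 => //; exact: ltW.
have hb := archi_boundP hq.
set N := Num.Def.archi_bound q in hb.
have hD := descent_N x s N.
suff : La * s ^+ 2 / (2 * N.+1%:R) <= e.
  move: hD; set X := f (vadd _ _); set Y := dotv _ _; set Z := La * _ / (2 * _).
  move=> hD hZ; lra.
rewrite ler_pdivrMr ?mulr_gt0 ?ltr0n //.
have hNN : q < N.+1%:R by apply: lt_trans hb _; rewrite ltr_nat.
have : La * s ^+ 2 = q * (2 * e) by rewrite /q divfK // gt_eqF // mulr_gt0.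
move=> ->; clearbody q N; nra.
Qed.

Lemma cross (x y : vec) : 0 < La ->
  (dotv (grad y) w - dotv (grad x) w) ^+ 2 <= 2 * La * (f y - f x - dotv (grad x) (vsub y x)).
Proof.
move=> hLa.
set q := dotv (grad y) w - dotv (grad x) w.
set t := q / La.
have h1 := grad_ineq hg hc x (vadd y (vscale (- t) w)).
have h2 := descent y (- t).
have e0 : vsub (vadd y (vscale (- t) w)) x = vadd (vsub y x) (vscale (- t) w).
  by apply/funext => i; rewrite /vsub /vadd /vscale; ring.
rewrite e0 dotvDr dotvZr in h1.
have e1 : t * q = 2 * (q ^+ 2 / (2 * La)) by rewrite /t; field; rewrite gt_eqF.
have e2 : La * (- t) ^+ 2 / 2 = q ^+ 2 / (2 * La) by rewrite /t; field; rewrite gt_eqF.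
rewrite e2 in h2.
have h3 : q ^+ 2 / (2 * La) <= f y - f x - dotv (grad x) (vsub y x).
  move: h1 h2 e1; rewrite /q.
  set A := f (vadd _ _); set gy := dotv (grad y) w; set gx := dotv (grad x) w.
  set D := dotv (grad x) (vsub y x); set Q := _ / (2 * La).
  move=> h1 h2 e1. clearbody t. lra.
have e4 : q ^+ 2 = q ^+ 2 / (2 * La) * (2 * La) by field; rewrite gt_eqF.
move: h3 e4; set Q := _ / (2 * La); set D := f y - _ - _.
move=> h3 ->; clearbody Q D t q; nra.
Qed.

End Descent.

Section Stat.
Context (R : realType) (n : nat) (f : ('I_n -> R) -> R) (grad : ('I_n -> R) -> 'I_n -> R).
Local Notation vec := ('I_n -> R).
Hypothesis hg : is_gradient f grad.
Hypothesis hc : convex_fun f.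
Variables (b : R) (lo up : 'I_n -> \bar R).

Lemma sum_vsub (y x : vec) : feasible b lo up y -> feasible b lo up x ->
  \sum_i vsub y x i = 0.
Proof. by move=> [hy _] [hx _]; rewrite /vsub sumrB hy hx subrr. Qed.

Lemma stat_dot (xs y : vec) : stationary b lo up grad xs -> feasible b lo up y ->
  0 <= dotv (grad xs) (vsub y xs).
Proof.
move=> [hxs [lam hlam]] hy.
have e : dotv (grad xs) (vsub y xs) = \sum_i (grad xs i - lam) * vsub y xs i.
  rewrite /dotv.
  under [RHS]eq_bigr do rewrite mulrBl.
  by rewrite sumrB -mulr_sumr sum_vsub // mulr0 subr0.
rewrite e; apply: sumr_ge0 => i _.
have [hl [hi hu]] := hlam i.
have [_ /(_ i) /andP [hyl hyu]] := hy.
have [_ /(_ i) /andP [hxl hxu]] := hxs.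
rewrite /vsub.
have [el|nl] := eqVneq ((xs i)%:E) (lo i).
  apply: mulr_ge0; first by rewrite subr_ge0; exact: hl.
  by rewrite subr_ge0 -lee_fin el.
have [eu|nu] := eqVneq ((xs i)%:E) (up i).
  apply: mulr_le0; first by rewrite subr_le0; exact: hu.
  by rewrite subr_le0 -lee_fin eu.
rewrite hi ?subrr ?mul0r //.
by rewrite !lt_neqAle hxl hxu eq_sym nl nu.
Qed.

Lemma stat_opt (xs y : vec) : stationary b lo up grad xs -> feasible b lo up y ->
  f xs <= f y.
Proof.
move=> hs hy; have := grad_ineq hg hc xs y; have := stat_dot hs hy; lra.
Qed.

End Stat.

Section Ereal.
Context (R : realType).
Local Open Scope ereal_scope.

Lemma ef_le_sub (e : \bar R) (a r : R) : e != -oo -> r%:E <= e - a%:E -> (a + r)%:E <= e.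
Proof.
case: e => [u| |] //= _; rewrite ?leey //.
by rewrite -EFinB !lee_fin => h; rewrite -lerBrDl.
Qed.

Lemma ef_le_subl (e : \bar R) (a r : R) : e != +oo -> r%:E <= a%:E - e -> e <= (a - r)%:E.
Proof.
case: e => [u| |] //= _; rewrite ?leNye //.
by rewrite -EFinB !lee_fin => h; rewrite lerBrDl -lerBrDr.
Qed.

Lemma ef_eq_sub (e : \bar R) (a r : R) : r%:E = e - a%:E -> (a + r)%:E = e.
Proof.
case: e => [u| |] //=.
by rewrite -EFinB => -[->]; congr EFin; rewrite addrC subrK.
Qed.

Lemma ef_eq_subl (e : \bar R) (a r : R) : r%:E = a%:E - e -> e = (a - r)%:E.
Proof.
case: e => [u| |] //=.
by rewrite -EFinB => -[->]; congr EFin; rewrite opprB addrC subrK.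
Qed.

Lemma ef_sub_ge0 (e : \bar R) (a : R) : a%:E <= e -> 0 <= e - a%:E.
Proof.
case: e => [u| |] //=; rewrite ?leey //.
by rewrite -EFinB !lee_fin subr_ge0.
Qed.

Lemma ef_subl_ge0 (e : \bar R) (a : R) : e <= a%:E -> 0 <= a%:E - e.
Proof.
case: e => [u| |] //=; rewrite ?leey //.
by rewrite -EFinB !lee_fin subr_ge0.
Qed.

Lemma mul_inv_le (m : \bar R) (g al : R) : (0 < g)%R -> 0 <= m ->
  al%:E <= m * (g^-1)%:E -> (al * g)%:E <= m.
Proof.
move=> hg; case: m => [r| |] //=; rewrite ?leey //.
rewrite lee_fin => hr; rewrite -EFinM lee_fin => h.
by rewrite lee_fin -ler_pdivlMr.
Qed.

Lemma mul_inv_eq (m : \bar R) (g al : R) : (0 < g)%R ->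
  al%:E = m * (g^-1)%:E -> (al * g)%:E = m.
Proof.
move=> hg; case: m => [r| |] //=.
- by rewrite -EFinM => -[->]; rewrite divfK // gt_eqF.
- by rewrite gt0_mulye ?lte_fin ?invr_gt0.
- by rewrite gt0_mulNye ?lte_fin ?invr_gt0.
Qed.

Lemma mul_inv_ge0 (m : \bar R) (g : R) : (0 < g)%R -> 0 <= m -> 0 <= m * (g^-1)%:E.
Proof. by move=> hg hm; apply: mule_ge0 => //; rewrite lee_fin invr_ge0 ltW. Qed.

Lemma min_ge0 (a b : \bar R) : 0 <= a -> 0 <= b -> 0 <= Order.min a b.
Proof. by move=> ha hb; rewrite le_min ha hb. Qed.

Lemma le_min_both (a b c : \bar R) : c <= Order.min a b -> c <= a /\ c <= b.
Proof. by rewrite le_min => /andP. Qed.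

Lemma min_cases (a b : \bar R) : Order.min a b = a \/ Order.min a b = b.
Proof. by rewrite /Order.min; case: ifP => _; [left|right]. Qed.

Lemma fine_min_props (e : \bar R) (a : R) : 0 <= e -> (0 <= a)%R ->
  let D := fine (Order.min e a%:E) in
  [/\ (0 <= D)%R, (D <= a)%R, D%:E <= e, (e < a%:E -> D%:E = e) & (a%:E <= e -> D = a)].
Proof.
case: e => [r| |] //= hr ha.
- rewrite lee_fin in hr.
  have -> : Order.min r%:E a%:E = (Num.min r a)%:E.
    by rewrite /Order.min lte_fin; case: ifP.
  rewrite /= le_min hr ha ge_min lexx orbT lee_fin ge_min lexx; split => //.
    by rewrite lte_fin => h; rewrite /Num.min h.
  by rewrite lee_fin => h; rewrite /Num.min ltNge h.
- by split => //; rewrite ?leey // ltNge leey.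
Qed.

End Ereal.

Section Move.
Context (R : realType) (n : nat) (b : R) (lo up : 'I_n -> \bar R).
Local Notation vec := ('I_n -> R).
Local Notation dirv := (@dirv R n).
Hypothesis hlo : forall i, lo i != +oo%E.
Hypothesis hup : forall i, up i != -oo%E.

Lemma mv_coord (zi : vec) P J c q :
  vadd zi (vscale c (dirv P J)) q =
  zi q + c * ((if q == P then 1 else 0) - (if q == J then 1 else 0)).
Proof. by []. Qed.

Lemma alphabar_ge0 (zi : vec) P J g : feasible b lo up zi ->
  (0 <= alphabar lo up zi P J g)%E.
Proof.
move=> [_ hz]; have /andP [hPl hPu] := hz P; have /andP [hJl hJu] := hz J.
rewrite /alphabar; case: ifP => hg.
  apply: mul_inv_ge0 => //; apply: min_ge0; [exact: ef_sub_ge0 | exact: ef_subl_ge0].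
case: ifP => hg' //.
apply: mul_inv_ge0; first by rewrite normr_gt0 ltr0_neq0.
apply: min_ge0; [exact: ef_subl_ge0 | exact: ef_sub_ge0].
Qed.

Lemma move_feasible (zi : vec) P J (g al : R) : feasible b lo up zi -> 0 <= al ->
  (al%:E <= alphabar lo up zi P J g)%E ->
  feasible b lo up (vadd zi (vscale (al * g) (dirv P J))).
Proof.
move=> hf hal hab; have [hs hz] := hf.
have /andP [hPl hPu] := hz P; have /andP [hJl hJu] := hz J.
split.
  rewrite /vadd big_split /= hs -/(vscale _ _) /vscale -mulr_sumr sum_dirv mulr0 addr0 //.
have [-> | hPJ] := eqVneq P J.
  by move=> q; rewrite mv_coord subrr mulr0 addr0; exact: hz q.
move=> q; rewrite mv_coord.
move: hab; rewrite /alphabar.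
case: (ltrgtP 0 g) => hg.
- move=> /(mul_inv_le hg (min_ge0 (ef_sub_ge0 hPu) (ef_subl_ge0 hJl))).
  move=> /le_min_both [h1 h2].
  have hag : 0 <= al * g by rewrite mulr_ge0 // ltW.
  have [hqP|nP] := eqVneq q P.
    rewrite hqP ?eqxx ?(negbTE hPJ) subr0 mulr1 (ef_le_sub (hup P) h1) andbT.
    by apply: le_trans hPl _; rewrite lee_fin lerDl.
  have [hqJ|nJ] := eqVneq q J.
    rewrite hqJ ?eqxx sub0r mulrN1 (ef_le_subl (hlo J) h2) /=.
    by apply: le_trans _ hJu; rewrite lee_fin gerDl oppr_le0.
  by rewrite subrr mulr0 addr0; exact: hz q.
- have hg' : 0 < `|g| by rewrite normr_gt0 ltr0_neq0.
  move=> /(mul_inv_le hg' (min_ge0 (ef_subl_ge0 hPl) (ef_sub_ge0 hJu))).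
  move=> /le_min_both [h1 h2].
  have hag : 0 <= al * `|g| by rewrite mulr_ge0 // ltW.
  have eg : al * g = - (al * `|g|) by rewrite ltr0_norm // mulrN opprK.
  have [hqP|nP] := eqVneq q P.
    rewrite hqP ?eqxx ?(negbTE hPJ) subr0 mulr1 eg (ef_le_subl (hlo P) h1) /=.
    by apply: le_trans _ hPu; rewrite lee_fin gerDl oppr_le0.
  have [hqJ|nJ] := eqVneq q J.
    rewrite hqJ ?eqxx sub0r mulrN1 eg opprK (ef_le_sub (hup J) h2) andbT.
    by apply: le_trans hJl _; rewrite lee_fin lerDl.
  by rewrite subrr mulr0 addr0; exact: hz q.
- by move=> _; rewrite -hg mulr0 mul0r addr0; exact: hz q.
Qed.

Lemma boundary (zi : vec) P J (g al : R) : feasible b lo up zi -> P != J -> g != 0 ->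
  al%:E = alphabar lo up zi P J g ->
  (lo J < (zi J - al * g)%:E)%E -> ((zi J - al * g)%:E < up J)%E ->
  (0 < g /\ (zi P + al * g)%:E = up P) \/ (g < 0 /\ (zi P + al * g)%:E = lo P).
Proof.
move=> [_ hz] hPJ hg0 hab hl hu.
have /andP [hPl hPu] := hz P; have /andP [hJl hJu] := hz J.
move: hab; rewrite /alphabar.
case: (ltrgtP 0 g) => hg.
- move=> /(mul_inv_eq hg) e; left; split => //.
  have [e1|e1] := min_cases (up P - (zi P)%:E) ((zi J)%:E - lo J); rewrite e1 in e.
    exact: ef_eq_sub.
  by move: hl; rewrite -(ef_eq_subl e) ltxx.
- have hg' : 0 < `|g| by rewrite normr_gt0 ltr0_neq0.
  move=> /(mul_inv_eq hg') e; right; split => //.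
  have eg : al * g = - (al * `|g|) by rewrite ltr0_norm // mulrN opprK.
  rewrite eg in hu *.
  have [e1|e1] := min_cases ((zi P)%:E - lo P) (up J - (zi J)%:E); rewrite e1 in e.
    by rewrite (ef_eq_subl e).
  by move: hu; rewrite opprK -(ef_eq_sub e) ltxx.
- by move: hg0; rewrite -hg eqxx.
Qed.

End Move.

Section CS.
Context (R : realType).

Lemma cs_sq (I : finType) (P : pred I) (u v : I -> R) :
  (\sum_(i | P i) u i * v i) ^+ 2 <= (\sum_(i | P i) u i ^+ 2) * (\sum_(i | P i) v i ^+ 2).
Proof.
have h0 : 0 <= \sum_(i | P i) \sum_(j | P j) (u i * v j - u j * v i) ^+ 2.
  by apply: sumr_ge0 => i _; apply: sumr_ge0 => j _; exact: sqr_ge0.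
have e : \sum_(i | P i) \sum_(j | P j) (u i * v j - u j * v i) ^+ 2 =
  (\sum_(i | P i) u i ^+ 2) * (\sum_(j | P j) v j ^+ 2)
  + (\sum_(i | P i) v i ^+ 2) * (\sum_(j | P j) u j ^+ 2)
  - 2 * ((\sum_(i | P i) u i * v i) * (\sum_(j | P j) u j * v j)).
  rewrite !big_distrlr /= mulr_sumr -big_split /= -sumrB.
  apply: eq_bigr => i _; rewrite mulr_sumr -big_split /= -sumrB.
  by apply: eq_bigr => j _; ring.
rewrite e in h0.
move: h0; set A := \sum_(i | P i) u i ^+ 2; set B := \sum_(i | P i) v i ^+ 2.
set C := \sum_(i | P i) u i * v i; move=> h0.
rewrite expr2; lra.
Qed.

Lemma abs_le_of_sq (X Y : R) : 0 <= Y -> X ^+ 2 <= Y ^+ 2 -> `|X| <= Y.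
Proof.
move=> hY h; rewrite -sqrtr_sqr -(ger0_norm hY) -sqrtr_sqr.
by rewrite ler_sqrt // sqr_ge0.
Qed.

Lemma cs (I : finType) (P : pred I) (u v : I -> R) :
  \sum_(i | P i) `|u i| * `|v i| <=
    Num.sqrt (\sum_(i | P i) u i ^+ 2) * Num.sqrt (\sum_(i | P i) v i ^+ 2).
Proof.
have hA : 0 <= \sum_(i | P i) u i ^+ 2 by apply: sumr_ge0 => i _; exact: sqr_ge0.
have hB : 0 <= \sum_(i | P i) v i ^+ 2 by apply: sumr_ge0 => i _; exact: sqr_ge0.
have hC : 0 <= \sum_(i | P i) `|u i| * `|v i|.
  by apply: sumr_ge0 => i _; rewrite mulr_ge0.
rewrite -(ger0_norm hC); apply: abs_le_of_sq; first by rewrite mulr_ge0 ?sqrtr_ge0.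
rewrite exprMn !sqr_sqrtr //.
have := cs_sq P (fun i => `|u i|) (fun i => `|v i|).
have e1 : forall w : I -> R, \sum_(i | P i) `|w i| ^+ 2 = \sum_(i | P i) w i ^+ 2.
  by move=> w; apply: eq_bigr => i _; rewrite real_normK ?num_real.
by rewrite !e1.
Qed.

End CS.

Lemma scale_bound (R : realType) (g al c1 : R) : 0 <= al -> 1 <= c1 * al ->
  `|g| <= c1 * `|al * g|.
Proof.
move=> h0 h1; rewrite normrM (ger0_norm h0) mulrA.
have := normr_ge0 g; move: (`|g|) => G hG; nra.
Qed.

Section Run.
Context (R : realType) (n : nat) (f : ('I_n -> R) -> R) (grad : ('I_n -> R) -> 'I_n -> R)
  (b : R) (lo up : 'I_n -> \bar R) (Lc : 'I_n -> 'I_n -> R)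
  (tau gamma delta Al Au : R)
  (x : nat -> 'I_n -> R) (j : nat -> 'I_n) (p : nat -> 'I_n -> 'I_n)
  (z : nat -> nat -> 'I_n -> R) (A alpha : nat -> nat -> R).
Local Notation vec := ('I_n -> R).
Local Notation dirv := (@dirv R n).
Hypothesis hlo : forall i, lo i != +oo%E.
Hypothesis hup : forall i, up i != -oo%E.
Hypothesis hg : is_gradient f grad.
Hypothesis hc : convex_fun f.
Hypothesis hpl : pair_lip_consts grad Lc.
Hypothesis hgam : 0 < gamma < 1.
Hypothesis hdel : 0 < delta < 1.
Hypothesis hAl : 0 < Al.
Hypothesis hAlu : Al <= Au.
Hypothesis hrun : AC2CD_run lo up f grad tau gamma delta Al Au x j p z A alpha.

Definition C1 := Num.max Al^-1 (Lmax Lc / (2 * delta * (1 - gamma))).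

Lemma C1_l : Al^-1 <= C1. Proof. by rewrite /C1 le_max lexx. Qed.
Lemma C1_r : Lmax Lc / (2 * delta * (1 - gamma)) <= C1.
Proof. by rewrite /C1 le_max lexx orbT. Qed.

Lemma Lc_le_Lmax a c : Lc a c <= Lmax Lc.
Proof.
rewrite /Lmax; apply: le_trans (le_bigmax _ _ a).
exact: (le_bigmax _ (fun j => Lc a j) c).
Qed.

Lemma descentP (P J : 'I_n) (zi : vec) s : P != J ->
  f (vadd zi (vscale s (dirv P J))) <=
    f zi + s * dotv (grad zi) (dirv P J) + Lc P J * s ^+ 2 / 2.
Proof.
move=> hPJ; have [_ [_ hL]] := hpl.
by apply: (descent hg hc) => x0 s0 t0; apply: hL.
Qed.

Lemma step k (i : 'I_n) : feasible b lo up (z k i) ->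
  let zi := z k i in let P := p k i in let J := j k in
  let g := grad zi J - grad zi P in
  [/\ feasible b lo up (z k i.+1),
      0 <= alpha k i <= Au,
      f (z k i.+1) <= f zi - gamma * alpha k i * g ^+ 2,
      z k i.+1 = vadd zi (vscale (alpha k i * g) (dirv P J)) &
      (P != J -> g = 0 \/ `|g| <= C1 * `|alpha k i * g| \/
         (0 < g /\ (z k i.+1 P)%:E = up P) \/ (g < 0 /\ (z k i.+1 P)%:E = lo P))].
Proof.
move=> hf zi P J g.
have [_ [hinj [_ [_ [hall hreq]]]]] := hrun k.
have := hall i; cbv zeta; move=> [/andP [hA1 hA2] [[m [hal [harm hmin]]] hz1]].
rewrite -/zi -/P -/J -/g in hal harm hmin hz1.
set ab := alphabar lo up zi P J g in hal hmin.
set D := fine _ in hal hmin.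
have hab0 : (0 <= ab)%E := alphabar_ge0 P J g hf.
have hA0 : 0 <= A k i by apply: le_trans hA1; exact: ltW.
have [hD0 hDA hDab hDlt hDge] := fine_min_props hab0 hA0.
rewrite -/D in hD0 hDA hDab hDlt hDge.
have hd0 : 0 <= delta ^+ m by rewrite exprn_ge0 // ltW; case/andP: hdel.
have hd1 : delta ^+ m <= 1 by rewrite exprn_ile1 // ltW; case/andP: hdel.
have hal0 : 0 <= alpha k i by rewrite hal mulr_ge0.
have halD : alpha k i <= D by rewrite hal ler_piMr.
have hz1' : z k i.+1 = vadd zi (vscale (alpha k i * g) (dirv P J)).
  by rewrite hz1; apply/funext => q; rewrite /vadd /vscale mulrA.
have habE : ((alpha k i)%:E <= ab)%E by apply: le_trans hDab; rewrite lee_fin.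
split.
- rewrite hz1'; exact: move_feasible.
- by rewrite hal0 /=; apply: le_trans halD _; apply: le_trans hDA _.
- move: harm; rewrite /armijo -hz1 dotvZr dot_dirv.
  have -> : g * (grad zi P - grad zi J) = - g ^+ 2 by rewrite /g; ring.
  set F := f _; set F0 := f _; move=> h; clearbody F F0 g; nra.
- exact: hz1'.
move=> hPJ.
have [g0|gn0] := eqVneq g 0; first by left.
right.
case: m hal hmin hd0 hd1 => [|m'] hal hmin hd0 hd1.
  rewrite expr0 mulr1 in hal.
  case: (boolP (ab < (A k i)%:E)%E) => hlt.
    right.
    have e1 : (alpha k i)%:E = ab by rewrite hal hDlt.
    have hr := hreq i.+1 (ltn_ord i).
    have hJP : (J == P) = false by rewrite eq_sym; exact: negbTE hPJ.
    have ezJ : z k i.+1 J = zi J - alpha k i * g.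
      by rewrite hz1' mv_coord eqxx hJP sub0r mulrN1.
    have ezP : z k i.+1 P = zi P + alpha k i * g.
      by rewrite hz1' mv_coord eqxx (negbTE hPJ) subr0 mulr1.
    move: hr; rewrite ezJ => /andP [hr1 hr2].
    have := boundary hf hPJ gn0 e1 hr1 hr2.
    by rewrite ezP.
  left.
  rewrite -leNgt in hlt.
  apply: scale_bound => //.
  rewrite hal (hDge hlt).
  apply: le_trans (ler_wpM2r hA0 C1_l).
  by rewrite mulrC ler_pdivlMr // mul1r.
left.
have hnot := hmin m' (ltnSn m').
set t := D * delta ^+ m' in hnot.
have ht0 : 0 <= t by rewrite mulr_ge0 // exprn_ge0 // ltW; case/andP: hdel.
have hdes := descentP zi (t * g) hPJ.
have ev : vadd zi (vscale t (vscale g (dirv P J))) = vadd zi (vscale (t * g) (dirv P J)).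
  by apply/funext => q; rewrite /vadd /vscale mulrA.
rewrite /armijo in hnot. rewrite ev in hnot. rewrite (dotvZr (grad zi)) in hnot. rewrite dot_dirv in hnot.
rewrite dot_dirv in hdes.
have eg : grad zi P - grad zi J = - g by rewrite /g opprB.
rewrite eg in hnot hdes.
have hLP : 0 < Lc P J by have [h _] := hpl; exact: h.
have hLm := Lc_le_Lmax P J.
have hg2 : 0 < g ^+ 2 by rewrite exprn_even_gt0.
have key : 2 * (1 - gamma) < Lc P J * t.
  move: hnot hdes; set F := f _; clearbody F t g => hnot hdes.
  have h1 : (1 - gamma) * t * g ^+ 2 < Lc P J * t ^+ 2 * g ^+ 2 / 2.
    rewrite ltNge; apply/negP => hle; apply: hnot; nra.
  have htp : 0 < t.
    rewrite lt_neqAle ht0 andbT eq_sym; apply/eqP => ht; subst t; lra.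
  have h2 : (1 - gamma) * t * g ^+ 2 * 2 < (Lc P J * t) * t * g ^+ 2 by nra.
  have htg : 0 < t * g ^+ 2 by rewrite mulr_gt0.
  rewrite ltNge; apply/negP => hle.
  have := ler_wpM2r (ltW htg) hle; lra.
have hal' : alpha k i = t * delta by rewrite hal exprSr mulrA.
apply: scale_bound => //.
have hC := C1_r.
have hgm : 0 < 1 - gamma by rewrite subr_gt0; case/andP: hgam.
have hdp : 0 < delta by case/andP: hdel.
apply: le_trans (ler_wpM2r hal0 hC); rewrite hal'.
rewrite mulrAC ler_pdivlMr ?mulr_gt0 // mul1r.
clearbody t; nra.
Qed.



Lemma inner_feas k : feasible b lo up (x k) ->
  forall i, (i <= n)%N -> feasible b lo up (z k i) /\ f (z k i) <= f (x k).
Proof.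
have [_ [_ [hz0 _]]] := hrun k.
move=> hx; elim=> [|i IH] hi; first by rewrite hz0; split.
have hi' : (i < n)%N := hi.
have [hf hle] := IH (ltnW hi).
have [h1 /andP[h20 h21] h3 _ _] := @step k (Ordinal hi') hf.
split => //; apply: le_trans h3 _; apply: le_trans _ hle.
rewrite gerDl oppr_le0; apply: mulr_ge0; last exact: sqr_ge0.
by apply: mulr_ge0 => //; case/andP: hgam => /ltW.
Qed.

Lemma outer_feas : feasible b lo up (x 0%N) ->
  forall k, feasible b lo up (x k) /\ f (x k) <= f (x 0%N).
Proof.
move=> h0; elim=> [|k [hk hk0]]; first by split.
have [_ [_ [_ [hx1 _]]]] := hrun k.
have [h1 h2] := inner_feas hk (leqnn n).
by rewrite hx1; split => //; apply: le_trans h2 hk0.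
Qed.

Lemma Au_gt0 : 0 < Au. Proof. exact: lt_le_trans hAl hAlu. Qed.

Lemma decrease k : feasible b lo up (x k) ->
  gamma / Au * \sum_(t < n) (alpha k t * (grad (z k t) (j k) - grad (z k t) (p k t))) ^+ 2
    <= f (x k) - f (x k.+1).
Proof.
move=> hx.
have [_ [_ [hz0 [hx1 _]]]] := hrun k.
have e : f (x k) - f (x k.+1) = \sum_(t < n) (f (z k t) - f (z k t.+1)).
  rewrite -hz0 hx1 -(big_mkord xpredT (fun t => f (z k t) - f (z k t.+1))).
  rewrite -opprB -(telescope_sumr (fun t => f (z k t)) (leq0n n)) -sumrN.
  by apply: eq_bigr => t _; rewrite opprB.
rewrite e mulr_sumr; apply: ler_sum => t _.
have [hf _] := inner_feas hx (ltnW (ltn_ord t)).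
have [_ /andP[h20 h21] h3 _ _] := @step k t hf.
move: h3; set g := grad _ _ - grad _ _; set al := alpha k t; move=> h3.
have hAu := Au_gt0.
have hgm : 0 < gamma by case/andP: hgam.
suff : gamma / Au * (al * g) ^+ 2 <= gamma * al * g ^+ 2 by lra.
have e2 : gamma / Au * (al * g) ^+ 2 = (gamma * g ^+ 2 / Au) * (al * al).
  by field; rewrite gt_eqF.
have e3 : gamma * al * g ^+ 2 = (gamma * g ^+ 2 / Au) * (al * Au).
  by field; rewrite gt_eqF.
rewrite e2 e3.
have hc0 : 0 <= gamma * g ^+ 2 / Au.
  apply: divr_ge0; last exact: ltW hAu.
  apply: mulr_ge0; [exact: ltW | exact: sqr_ge0].
rewrite -/al in h20 h21.
have h22 : al * al <= al * Au by apply: ler_wpM2l.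
move: h22 hc0; set c := _ / Au; move=> h22 hc0; clearbody al g c; nra.
Qed.

Definition hf_ (v : vec) (i J : 'I_n) := dotv (grad v) (dirv i J).

Lemma zstep k (t : 'I_n) : feasible b lo up (x k) ->
  z k t.+1 = vadd (z k t) (vscale (alpha k t * (grad (z k t) (j k) - grad (z k t) (p k t)))
    (dirv (p k t) (j k))).
Proof.
move=> hx; have [hf _] := inner_feas hx (ltnW (ltn_ord t)).
by have [_ _ _ h _] := @step k t hf.
Qed.

Lemma coord_fixed k (m : 'I_n) : feasible b lo up (x k) -> p k m != j k ->
  forall t, (m < t)%N -> (t <= n)%N -> z k t (p k m) = z k m.+1 (p k m).
Proof.
move=> hx hmJ; have [_ [hinj _]] := hrun k.
elim=> [|t IH] // hmt htn.
have [->|hne] := eqVneq t m; first by [].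
have hmt' : (m < t)%N by rewrite ltn_neqAle eq_sym hne -ltnS.
have htn' : (t < n)%N := htn.
rewrite -(IH hmt' (ltnW htn)).
have := zstep (Ordinal htn') hx; rewrite /= => ->.
rewrite mv_coord.
have h1 : (p k m == p k (Ordinal htn')) = false.
  apply/negbTE/negP => /eqP /hinj /(congr1 val) /= hm.
  by move: hne; rewrite hm eqxx.
by rewrite h1 (negbTE hmJ) subrr mulr0 addr0.
Qed.

Lemma Lc_ge0 a c : 0 <= Lc a c.
Proof.
have [h1 [h2 _]] := hpl.
by have [->|hne] := eqVneq a c; [rewrite h2 | exact: ltW (h1 _ _ hne)].
Qed.

Lemma hdiff_step k (i : 'I_n) (t : 'I_n) : feasible b lo up (x k) -> i != j k ->
  `|hf_ (z k t.+1) i (j k) - hf_ (z k t) i (j k)| <=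
    Num.sqrt (Lc i (j k)) * (Num.sqrt (Lc (p k t) (j k)) *
      `|alpha k t * (grad (z k t) (j k) - grad (z k t) (p k t))|).
Proof.
move=> hx hiJ.
set s := alpha k t * _.
have hz := zstep t hx; rewrite -/s in hz.
have hR : 0 <= Num.sqrt (Lc i (j k)) * (Num.sqrt (Lc (p k t) (j k)) * `|s|).
  by rewrite !mulr_ge0 ?sqrtr_ge0.
have [hPJ|hPJ] := eqVneq (p k t) (j k).
  have -> : z k t.+1 = z k t.
    by rewrite hz hPJ; apply/funext => q; rewrite /vadd /vscale /dirv subrr mulr0 addr0.
  by rewrite subrr normr0.
apply: abs_le_of_sq => //.
have [h1 [_ hL]] := hpl.
have hLi := h1 _ _ hiJ.
have hcr := cross hg hc (fun x0 s0 t0 => hL i (j k) x0 s0 t0 hiJ) (z k t) (z k t.+1) hLi.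
have hd := descentP (z k t) s hPJ.
rewrite -hz in hd.
have ev : vsub (z k t.+1) (z k t) = vscale s (dirv (p k t) (j k)).
  by rewrite hz; apply/funext => q; rewrite /vsub /vadd addrC addKr.
rewrite ev dotvZr in hcr.
rewrite /hf_; apply: le_trans hcr _.
rewrite !exprMn !sqr_sqrtr ?Lc_ge0 // real_normK ?num_real //.
have hLP := Lc_ge0 (p k t) (j k).
set F1 := f (z k t.+1) in hd *; set F0 := f (z k t) in hd *.
set D := dotv _ _ in hd *.
have : F1 - F0 - s * D <= Lc (p k t) (j k) * s ^+ 2 / 2 by lra.
move=> h2; have := ler_wpM2l (ltW hLi) h2.
move: (Lc i (j k)) (Lc (p k t) (j k)) hLi hLP => a c ha hc0 h3.
have e : 2 * a * (F1 - F0 - s * D) = 2 * (a * (F1 - F0 - s * D)) by ring.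
rewrite e; have e2 : a * (c * s ^+ 2) = 2 * (a * (c * s ^+ 2 / 2)) by field.
by rewrite e2; apply: ler_wpM2l.
Qed.

Definition bsum k (u : nat) := \sum_(t < n | (t < u)%N)
  Num.sqrt (Lc (p k t) (j k)) * `|alpha k t * (grad (z k t) (j k) - grad (z k t) (p k t))|.

Lemma bsum_ge0 k u : 0 <= bsum k u.
Proof. by apply: sumr_ge0 => t _; rewrite mulr_ge0 ?sqrtr_ge0. Qed.

Lemma E_bound k (i : 'I_n) (m : nat) : feasible b lo up (x k) -> i != j k ->
  forall u, (m <= u)%N -> (u <= n)%N ->
  `|hf_ (z k u) i (j k) - hf_ (z k m) i (j k)| <= Num.sqrt (Lc i (j k)) * bsum k u.
Proof.
move=> hx hiJ; elim=> [|u IH] hmu hun.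
  move: hmu; rewrite leqn0 => /eqP ->; rewrite subrr normr0.
  by rewrite mulr_ge0 ?sqrtr_ge0 ?bsum_ge0.
have hu : (u < n)%N := hun.
have [->|hne] := eqVneq m u.+1.
  by rewrite subrr normr0 mulr_ge0 ?sqrtr_ge0 ?bsum_ge0.
have hmu' : (m <= u)%N by rewrite -ltnS ltn_neqAle hne hmu.
have IH' := IH hmu' (ltnW hun).
have hst := hdiff_step (Ordinal hu) hx hiJ; rewrite /= in hst.
have e : bsum k u.+1 = bsum k u +
   Num.sqrt (Lc (p k (Ordinal hu)) (j k)) *
     `|alpha k u * (grad (z k u) (j k) - grad (z k u) (p k (Ordinal hu)))|.
  rewrite /bsum (bigD1 (Ordinal hu)) //= addrC; congr (_ + _).
  apply: eq_bigl => t; rewrite ltnS; apply/idP/idP.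
    by case/andP => h1 h2; rewrite ltn_neqAle h1 andbT; apply: contra h2 => /eqP h; apply/eqP/val_inj.
  by move=> h; rewrite ltnW //=; apply/negP => /eqP h'; rewrite h' ltnn in h.
rewrite e mulrDr.
have -> : hf_ (z k u.+1) i (j k) - hf_ (z k m) i (j k) =
  (hf_ (z k u.+1) i (j k) - hf_ (z k u) i (j k)) + (hf_ (z k u) i (j k) - hf_ (z k m) i (j k)).
  by rewrite addrA subrK.
apply: le_trans (ler_normD _ _) _.
by rewrite addrC lerD.
Qed.

Lemma term_bound k (xs : vec) (i m : 'I_n) : feasible b lo up (x k) ->
  feasible b lo up xs -> i != j k -> p k m = i ->
  (grad (x k.+1) i - grad (x k.+1) (j k)) * (x k.+1 i - xs i) <=
    `|hf_ (z k n) i (j k) - hf_ (z k m) i (j k)| * `|x k.+1 i - xs i|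
    + C1 * `|alpha k m * (grad (z k m) (j k) - grad (z k m) (p k m))| * `|x k.+1 i - xs i|.
Proof.
move=> hx hxs hiJ hPm.
have [_ [_ [_ [hx1 _]]]] := hrun k.
have [hf _] := inner_feas hx (ltnW (ltn_ord m)).
have [_ _ _ _ hcl] := @step k m hf.
have hmJ : p k m != j k by rewrite hPm.
have hyi : x k.+1 i = z k m.+1 i.
  by rewrite hx1 -hPm (coord_fixed hx hmJ (ltn_ord m) (leqnn n)).
have hcl' := hcl hmJ; rewrite hPm in hcl'.
rewrite /hf_ !dot_dirv -hx1 hPm.
set g := grad (z k m) (j k) - grad (z k m) i in hcl' *.
set E := grad (x k.+1) i - grad (x k.+1) (j k) - (grad (z k m) i - grad (z k m) (j k)).
set d := x k.+1 i - xs i.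
have eE : grad (x k.+1) i - grad (x k.+1) (j k) = E - g by rewrite /E /g; ring.
rewrite eE.
have h1 : E * d <= `|E| * `|d| by rewrite -normrM ler_norm.
have hd0 : 0 <= `|d| := normr_ge0 d.
have hC0 : 0 <= C1 * `|alpha k m * g| * `|d|.
  rewrite mulr_ge0 // mulr_ge0 //; apply: le_trans C1_l; rewrite invr_ge0 ltW //.
have h2 : - g * d <= C1 * `|alpha k m * g| * `|d|.
  have [_ hxb] := hxs; have /andP [hxl hxu] := hxb i.
  case: hcl' => [g0|[hgb|[[hg0 hup']|[hg0 hlo']]]].
  - by move: hC0; rewrite g0 oppr0 mul0r.
  - apply: le_trans (_ : `|g| * `|d| <= _); last exact: ler_wpM2r.
    by rewrite -normrM mulNr -normrN ler_norm.
  - have : 0 <= d.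
      by rewrite /d subr_ge0 hyi -lee_fin hup'.
    move=> hd; apply: le_trans hC0; rewrite mulNr oppr_le0 mulr_ge0 // ltW //.
  - have : d <= 0.
      by rewrite /d subr_le0 hyi -lee_fin hlo'.
    move=> hd; apply: le_trans hC0; rewrite mulNr oppr_le0.
    by apply: mulr_le0 => //; exact: ltW.
lra.
Qed.

Definition sv k (t : 'I_n) := alpha k t * (grad (z k t) (j k) - grad (z k t) (p k t)).

Lemma sq_le_of_abs (X Y : R) : `|X| <= Y -> X ^+ 2 <= Y ^+ 2.
Proof.
move=> h; rewrite -real_normK ?num_real //.
have h0 := normr_ge0 X; rewrite !expr2; apply: le_trans (ler_wpM2l h0 h) _.
by apply: ler_wpM2r => //; apply: le_trans h.
Qed.

Lemma Q_bound k (xs : vec) : feasible b lo up (x k) -> feasible b lo up xs ->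
  dotv (grad (x k.+1)) (vsub (x k.+1) xs) <=
   (Lcol Lc (j k) + C1) * normj (j k) (vsub (x k.+1) xs) * Num.sqrt (\sum_(t < n) sv k t ^+ 2).
Proof.
move=> hx hxs.
have [_ [hinj [_ [hx1 _]]]] := hrun k.
set J := j k; set y := x k.+1; set dy := vsub y xs.
have hy : feasible b lo up y by rewrite /y hx1; exact: (inner_feas hx (leqnn n)).1.
have hsum : \sum_i dy i = 0 := sum_vsub hy hxs.
set mi := invF hinj.
have hPm : forall i, p k (mi i) = i := f_invF hinj.
set N := normj J dy; set S := Num.sqrt (\sum_(t < n) sv k t ^+ 2).
set B := bsum k n.
have hN : 0 <= N by exact: sqrtr_ge0.
have hS : 0 <= S by exact: sqrtr_ge0.
have hB : 0 <= B by exact: bsum_ge0.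
have hC1 : 0 <= C1 by apply: le_trans C1_l; rewrite invr_ge0 ltW.
set E := fun i => hf_ (z k n) i J - hf_ (z k (mi i)) i J.
have e1 : dotv (grad y) dy = \sum_(i | i != J) (grad y i - grad y J) * dy i.
  have e0 : dotv (grad y) dy = \sum_i (grad y i - grad y J) * dy i.
    rewrite /dotv; under [RHS]eq_bigr do rewrite mulrBl.
    by rewrite sumrB -mulr_sumr hsum mulr0 subr0.
  by rewrite e0 (bigD1 J) //= subrr mul0r add0r.
have e2 : dotv (grad y) dy <= \sum_(i | i != J) `|E i| * `|dy i|
    + C1 * \sum_(i | i != J) `|sv k (mi i)| * `|dy i|.
  rewrite e1 mulr_sumr -big_split /=; apply: ler_sum => i hi.
  have := term_bound hx hxs hi (hPm i).
  by rewrite -/y /dy /vsub mulrA.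
have c1 := cs (fun i => i != J) E dy.
have c2 := cs (fun i => i != J) (fun i => sv k (mi i)) dy.
rewrite -/N in c1 c2.
have hLcol : 0 <= Lcol Lc J by apply: sumr_ge0 => i _; exact: Lc_ge0.
have hLsum : \sum_(t < n) Lc (p k t) J = Lcol Lc J.
  by rewrite /Lcol [RHS](reindex_inj hinj).
have hBb : B <= Num.sqrt (Lcol Lc J) * S.
  have eB : B = \sum_t `|Num.sqrt (Lc (p k t) J)| * `|sv k t|.
    rewrite /B /bsum; apply: eq_big => t; first exact: ltn_ord.
    by move=> _; rewrite (ger0_norm (sqrtr_ge0 _)).
  rewrite eB; apply: le_trans (cs xpredT _ _) _.
  apply: ler_wpM2r => //; rewrite ler_sqrt ?hLcol // -hLsum.
  by rewrite le_eqVlt; apply/orP; left; apply/eqP; apply: eq_bigr => t _; rewrite sqr_sqrtr ?Lc_ge0.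
have hE : Num.sqrt (\sum_(i | i != J) E i ^+ 2) <= Lcol Lc J * S.
  have h1 : \sum_(i | i != J) E i ^+ 2 <= Lcol Lc J * B ^+ 2.
    apply: le_trans (_ : \sum_(i | i != J) Lc i J * B ^+ 2 <= _).
      apply: ler_sum => i hi.
      have hEb := E_bound hx hi (leq_trans (ltnW (ltn_ord (mi i))) (leqnn n)) (leqnn n).
      have := sq_le_of_abs hEb; rewrite exprMn sqr_sqrtr ?Lc_ge0 //.
    rewrite -mulr_suml; apply: ler_wpM2r; first exact: sqr_ge0.
    rewrite /Lcol [X in _ <= X](bigD1 J) //= lerDr; exact: Lc_ge0.
  apply: le_trans (_ : Num.sqrt (Lcol Lc J * B ^+ 2) <= _).
    by rewrite ler_sqrt // mulr_ge0 // sqr_ge0.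
  rewrite sqrtrM // sqrtr_sqr (ger0_norm hB).
  apply: le_trans (ler_wpM2l (sqrtr_ge0 _) hBb) _.
  by rewrite mulrA -expr2 sqr_sqrtr.
have hs : Num.sqrt (\sum_(i | i != J) sv k (mi i) ^+ 2) <= S.
  rewrite ler_sqrt; last by apply: sumr_ge0 => t _; exact: sqr_ge0.
  have -> : \sum_(t < n) sv k t ^+ 2 = \sum_i sv k (mi i) ^+ 2.
    rewrite [RHS](reindex_inj hinj); apply: eq_bigr => t _.
    by rewrite /mi invF_f.
  by rewrite [X in _ <= X](bigD1 J) //= lerDr sqr_ge0.
apply: le_trans e2 _.
have h3 : \sum_(i | i != J) `|E i| * `|dy i| <= Lcol Lc J * S * N.
  by apply: le_trans c1 _; apply: ler_wpM2r.
have h4 : \sum_(i | i != J) `|sv k (mi i)| * `|dy i| <= S * N.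
  by apply: le_trans c2 _; apply: ler_wpM2r.
have h5 := ler_wpM2l hC1 h4.
move: h3 h5; clearbody N S; move: (Lcol Lc J) C1 => L c h3 h5.
set T1 := \sum_(i | _) _ in h3 *; set T2 := \sum_(i | _) _ in h5 *.
have : T1 + c * T2 <= L * S * N + c * (S * N) by lra.
move=> h6; apply: le_trans h6 _.
by rewrite le_eqVlt; apply/orP; left; apply/eqP; ring.
Qed.

Lemma final k (fstar R0 Gstar : R) : (2 <= n)%N -> feasible b lo up (x 0%N) ->
  is_opt_value b lo up f fstar ->
  is_max_of (R0_set b lo up f grad (x 0%N)) R0 ->
  is_max_of (G_set b lo up grad) Gstar ->
  gamma * (f (x k.+1) - fstar) ^+ 2 / (Au * (n - 1)%:R * (C1 * R0 + 2 * Lhat Lc * R0 + Gstar) ^+ 2)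
    <= f (x k) - f (x k.+1).
Proof.
move=> hn b0 hopt hR0 hG.
set K := C1 * R0 + 2 * Lhat Lc * R0 + Gstar.
have [hxk hxk0] := outer_feas b0 k.
have [hy hy0] := outer_feas b0 k.+1.
have [[jj [y0 [xs [_ [hxs _]]]]] hR0max] := hR0.
have hxsf : feasible b lo up xs := hxs.1.
have hfs : f xs <= fstar.
  apply/ler_addgt0Pr => e he; have [y' hy' hlt] := hopt.2 e he.
  have := stat_opt hg hc hxs hy'; lra.
have hfy : fstar <= f (x k.+1) := hopt.1 _ hy.
have hG0 : 0 <= Gstar.
  apply: hG.2; exists jj, jj, xs; split => //; by rewrite subrr.
have hR0ge : normj (j k) (vsub (x k.+1) xs) <= R0.
  by apply: hR0max; exists (j k), (x k.+1), xs.
have hR00 : 0 <= R0 := le_trans (sqrtr_ge0 _) hR0ge.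
have hLh : Lcol Lc (j k) <= Lhat Lc by exact: (le_bigmax _ (fun jj => Lcol Lc jj) (j k)).
have hLh0 : 0 <= Lcol Lc (j k) by apply: sumr_ge0 => i _; exact: Lc_ge0.
have hC1 : 0 <= C1 by apply: le_trans C1_l; rewrite invr_ge0 ltW.
have hQ := Q_bound hxk hxsf.
have hgi := grad_ineq hg hc (x k.+1) xs.
have ev : dotv (grad (x k.+1)) (vsub xs (x k.+1)) = - dotv (grad (x k.+1)) (vsub (x k.+1) xs).
  by rewrite !dotvBr opprB.
rewrite ev in hgi.
have hdec := decrease hxk.
set S2 := \sum_(t < n) _ in hdec.
have eS2 : \sum_(t < n) sv k t ^+ 2 = S2 by [].
rewrite eS2 in hQ.
set S := Num.sqrt S2 in hQ.
have hS2 : 0 <= S2 by apply: sumr_ge0 => t _; exact: sqr_ge0.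
have hS : 0 <= S := sqrtr_ge0 _.
have hSS : S ^+ 2 = S2 by rewrite sqr_sqrtr.
set N := normj _ _ in hQ hR0ge.
have hN : 0 <= N := sqrtr_ge0 _.
set D := f (x k.+1) - fstar.
have hD0 : 0 <= D by rewrite subr_ge0.
have hK0 : 0 <= K.
  rewrite /K; have := le_trans hLh0 hLh; move: (Lhat Lc) => L hL0.
  have : 0 <= L * R0 by rewrite mulr_ge0.
  have : 0 <= C1 * R0 by rewrite mulr_ge0.
  lra.
have hDK : D <= K * S.
  have h1 : (Lcol Lc (j k) + C1) * N * S <= (Lhat Lc + C1) * R0 * S.
    apply: ler_wpM2r => //; apply: le_trans (ler_wpM2l _ hR0ge) _.
      by rewrite addr_ge0.
    by apply: ler_wpM2r => //; rewrite lerD2r.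
  have h2 : (Lhat Lc + C1) * R0 * S <= K * S.
    apply: ler_wpM2r => //; rewrite /K.
    have := le_trans hLh0 hLh; move: (Lhat Lc) => L hL0.
    have : 0 <= L * R0 by rewrite mulr_ge0.
    have : 0 <= C1 * R0 by rewrite mulr_ge0.
    lra.
  move: hQ hgi h1 h2; rewrite /D.
  set Q := dotv _ _; move=> hQ hgi h1 h2.
  lra.
have hAu := Au_gt0.
have hgm : 0 < gamma by case/andP: hgam.
have hm : 1 <= (n - 1)%:R :> R by rewrite ler1n subn_gt0.
apply: le_trans hdec.
have [K0|Kp] := eqVneq K 0.
  rewrite K0 expr0n /= mulr0 invr0 mulr0.
  by rewrite mulr_ge0 // divr_ge0 // ltW.
have hKp : 0 < K by rewrite lt_neqAle eq_sym Kp hK0.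
have hden : 0 < Au * (n - 1)%:R * K ^+ 2.
  by rewrite !mulr_gt0 // ?exprn_gt0 // (lt_le_trans ltr01 hm).
rewrite ler_pdivrMr //.
have hD2 : D ^+ 2 <= K ^+ 2 * S2.
  rewrite -hSS -exprMn; apply: sq_le_of_abs; rewrite ger0_norm //.
have e : gamma / Au * S2 * (Au * (n - 1)%:R * K ^+ 2) = gamma * (K ^+ 2 * S2) * (n - 1)%:R.
  by field; rewrite gt_eqF.
rewrite e -mulrA; apply: ler_wpM2l; first exact: ltW.
apply: le_trans hD2 _.
by rewrite ler_peMr // mulr_ge0 // sqr_ge0.
Qed.
End Run.

Unset Implicit Arguments.
Unset Strict Implicit.

Theorem proposition4 (R : realType) (n : nat)
  (f : ('I_n -> R) -> R) (grad : ('I_n -> R) -> 'I_n -> R)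
  (b : R) (lo up : 'I_n -> \bar R) (Lc : 'I_n -> 'I_n -> R)
  (tau gamma delta Al Au : R)
  (x : nat -> 'I_n -> R) (j : nat -> 'I_n) (p : nat -> 'I_n -> 'I_n)
  (z : nat -> nat -> 'I_n -> R) (A alpha : nat -> nat -> R)
  (fstar R0 Gstar : R) :
  (2 <= n)%N ->
  (forall i, lo i != +oo%E) -> (forall i, up i != -oo%E) ->
  (forall i, (lo i < up i)%E) ->
  is_gradient f grad -> lipschitz_grad grad ->
  pair_lip_consts grad Lc ->
  convex_fun f ->
  0 < tau <= 1 -> 0 < gamma < 1 -> 0 < delta < 1 -> 0 < Al -> Al <= Au ->
  feasible b lo up (x 0%N) ->
  (* L_0 is nonempty (it contains x^0) and compact *)
  (exists M : R, forall y, in_L0 b lo up f (x 0%N) y -> forall i, `|y i| <= M) ->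
  (forall y, in_L0 b lo up f (x 0%N) y -> exists i, (lo i < (y i)%:E < up i)%E) ->
  AC2CD_run lo up f grad tau gamma delta Al Au x j p z A alpha ->
  is_opt_value b lo up f fstar ->
  is_max_of (R0_set b lo up f grad (x 0%N)) R0 ->
  is_max_of (G_set b lo up grad) Gstar ->
  let K := Num.max (Al^-1) (Lmax Lc / (2 * delta * (1 - gamma))) * R0
           + 2 * Lhat Lc * R0 + Gstar in
  forall k : nat,
    gamma * (f (x k.+1) - fstar) ^+ 2 / (Au * (n - 1)%:R * K ^+ 2)
      <= f (x k) - f (x k.+1).
Proof.
move=> hn hlo hup hlu hgr hlip hpl hc htau hgam hdel hAl hAlu hx0 hbd hint hrun hopt hR0 hG K k.
exact: (final hlo hup hgr hc hpl hgam hdel hAl hAlu hrun k hn hx0 hopt hR0 hG).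
Qed.
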